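(* For every $l\ge0$, $a=1,\dots,p_1$, $b=1,\dots,p_2$: $$zA^{(l)}_a(z)=\sum_{k=-N_2}^{N_1}J_k(l)A^{(l+k)}_a(z),\qquad zC^{(l)}_b(z)-c_b^{(l)}=\sum_{k=-N_2}^{N_1}J_k(l)C^{(l+k)}_b(z),$$ $$z\bar A^{(l)}_b(z)=\sum_{k=-N_2}^{N_1}J_k(l-k)\bar A^{(l-k)}_b(z),\qquad z\bar C^{(l)}_a(z)-\bar c_a^{(l)}=\sum_{k=-N_2}^{N_1}J_k(l-k)\bar C^{(l-k)}_a(z),$$ where terms with a negative superscript or negative argument are zero.
   Context: Setting: $\mu$ finite Borel measure on an interval, weights $w_{1,a}$ ($a\le p_1$), $w_{2,b}$ ($b\le p_2$), compositions $\vec n_\ell=(n_{\ell,1},\dots,n_{\ell,p_\ell})\in\mathbb N^{p_\ell}$; each $i\in\mathbb Z_+$ is uniquely $i=q|\vec n_\ell|+n_{\ell,1}+\dots+n_{\ell,a-1}+r$ ($0\le r<n_{\ell,a}$), $a_\ell(i)=a$, $k_\ell(i)=qn_{\ell,a}+r$; moment matrix $g_{i,j}=\int x^{k_1(i)+k_2(j)}w_{1,a_1(i)}w_{2,a_2(j)}d\mu$, assumed to factor as $g=S^{-1}\bar S$ ($S$ unit lower triangular, $\bar S$ upper triangular invertible). $e_{\ell,a}(k)=e_i$ with $a_\ell(i)=a,k_\ell(i)=k$; $\Lambda_{\ell,a}=\sum_ke_{\ell,a}(k)e_{\ell,a}(k+1)^\top$, $\Upsilon_\ell=\sum_a\Lambda_{\ell,a}$;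 $J=S\Upsilon_1S^{-1}=\bar S\Upsilon_2^\top\bar S^{-1}$ and $J_k(l):=J_{l,l+k}$. $N_1=\max_a(|\vec n_1|-n_{1,a}+1)$, $N_2=\max_b(|\vec n_2|-n_{2,b}+1)$. $\chi_{\ell,a}(z)=\sum_ke_{\ell,a}(k)z^k$, $\chi^*_{\ell,a}(z)=z^{-1}\chi_{\ell,a}(z^{-1})$. $A^{(l)}_a$ is the $l$-th entry of $S\chi_{1,a}$, $\bar A^{(l)}_b$ the $l$-th entry of $(\bar S^{-1})^\top\chi_{2,b}$, $C^{(l)}_b$ the $l$-th entry of the formal series vector $\bar S\chi^*_{2,b}(z)$, $\bar C^{(l)}_a$ the $l$-th entry of $(S^{-1})^\top\chi^*_{1,a}(z)$; $c_b=\bar Se_{2,b}(0)$, $\bar c_a=(S^{-1})^\top e_{1,a}(0)$, with $l$-th entries $c^{(l)}_b$, $\bar c^{(l)}_a$. *)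

(* Defs.v *)
From HB Require Import structures.
From mathcomp Require Import all_boot all_order all_algebra.
From mathcomp Require Import all_classical all_reals all_analysis.

Set Implicit Arguments.
Unset Strict Implicit.
Unset Printing Implicit Defensive.
Import Order.TTheory GRing.Theory Num.Theory.

(* Index bookkeeping for a composition n = (n 0, ..., n (p-1)),        *)
(* components indexed 0-based (paper's a = 1..p is our a = 0..p-1).    *)

Definition tot (p : nat) (n : nat -> nat) : nat := \sum_(b < p) n b.
Definition off (n : nat -> nat) (a : nat) : nat := \sum_(b < a) n b.

(* i = q|n| + off a + r with 0 <= r < n a : a(i) is the unique a with
   off a <= i mod |n| < off (a+1). *)
Definition aidx (p : nat) (n : nat -> nat) (i : nat) : nat :=
  find (fun a => i %% tot p n < off n a.+1) (iota 0 p).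
Definition kidx (p : nat) (n : nat -> nat) (i : nat) : nat :=
  (i %/ tot p n) * n (aidx p n i) + (i %% tot p n - off n (aidx p n i)).
(* e_a(k) is e_i with a(i) = a, k(i) = k; this is that index i *)
Definition eidx (p : nat) (n : nat -> nat) (a k : nat) : nat :=
  (k %/ n a) * tot p n + off n a + k %% n a.

Definition Nbd (p : nat) (n : nat -> nat) : nat :=
  \max_(a < p) (tot p n - n a + 1).

Section Defs.
Variable R : realType.
Local Open Scope ring_scope.

Definition mat := nat -> nat -> R.

Definition lower_tri (M : mat) := forall i j, (i < j)%N -> M i j = 0.
Definition upper_tri (M : mat) := forall i j, (j < i)%N -> M i j = 0.
Definition idmat : mat := fun i j => (i == j)%:R.

(* product A * B when A is lower triangular (finite sum) *)
Definition mulL (A B : mat) : mat := fun i j => \sum_(k < i.+1) A i k * B k j.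
(* product A * B when B is upper triangular (finite sum) *)
Definition mulU (A B : mat) : mat := fun i j => \sum_(k < j.+1) A i k * B k j.

Definition moment (mu : {finite_measure set R -> \bar R}) (I : interval R)
  (p1 p2 : nat) (n1 n2 : nat -> nat) (w1 w2 : nat -> R -> R) : mat :=
  fun i j => Rintegral mu [set` I]
     (fun x => x ^+ (kidx p1 n1 i + kidx p2 n2 j)
               * w1 (aidx p1 n1 i) x * w2 (aidx p2 n2 j) x).

(* Lambda_a = sum_k e_a(k) e_a(k+1)^T  and  Upsilon = sum_a Lambda_a *)
Definition Lam (p : nat) (n : nat -> nat) (a : nat) : mat :=
  fun i j => ((aidx p n i == a) && (aidx p n j == a)
              && (kidx p n j == (kidx p n i).+1))%:R.
Definition Ups (p : nat) (n : nat -> nat) : mat :=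
  fun i j => \sum_(a < p) Lam p n a i j.

(* J = S Upsilon_1 S^{-1}.  S is lower triangular (i <= l) and row i of
   Upsilon_1 is supported in columns j <= i + |n1|, so the sums are exact. *)
Definition Jmat (p1 : nat) (n1 : nat -> nat) (S Sinv : mat) : mat :=
  fun l m => \sum_(i < l.+1) \sum_(j < (l + tot p1 n1).+1)
               S l i * Ups p1 n1 i j * Sinv j m.

Definition Jz (J : mat) (i j : int) : R :=
  if (0 <= i) && (0 <= j) then J `|i|%N `|j|%N else 0.

(* the vector chi_a(z) = sum_k e_a(k) z^k, entrywise *)
Definition chi (p : nat) (n : nat -> nat) (a i : nat) : {poly R} :=
  if aidx p n i == a then 'X^(kidx p n i) else 0.

(* A^{(l)}_a = l-th entry of S chi_{1,a}   (S lower triangular) *)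
Definition Apol (p1 : nat) (n1 : nat -> nat) (S : mat) (l a : nat) : {poly R} :=
  \sum_(i < l.+1) S l i *: chi p1 n1 a i.
(* Abar^{(l)}_b = l-th entry of (Sbar^{-1})^T chi_{2,b}  (Sbar^{-1} upper tri) *)
Definition Abpol (p2 : nat) (n2 : nat -> nat) (Sbinv : mat) (l b : nat)
  : {poly R} := \sum_(i < l.+1) Sbinv i l *: chi p2 n2 b i.

Definition Az (P : nat -> nat -> {poly R}) (l : int) (a : nat) : {poly R} :=
  if 0 <= l then P `|l|%N a else 0.

(* Formal series in z^{-1}: F : int -> R, F m = coefficient of z^m.
   chi*_a(z) = z^{-1} chi_a(z^{-1}) = sum_k e_a(k) z^{-k-1}; its entry i has
   coefficient 1 at z^m iff a(i) = a and k(i) = -m-1.  Hence the l-th entry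
   of M chi*_a has coefficient M l (e_a(-m-1)) at z^m for m < 0, and 0 for
   m >= 0. *)
Definition fser := int -> R.

(* C^{(l)}_b = l-th entry of Sbar chi*_{2,b}(z) *)
Definition Cser (p2 : nat) (n2 : nat -> nat) (Sb : mat) (l b : nat) : fser :=
  fun m => if m < 0 then Sb l (eidx p2 n2 b (`|m| - 1)) else 0.
(* Cbar^{(l)}_a = l-th entry of (S^{-1})^T chi*_{1,a}(z) *)
Definition Cbser (p1 : nat) (n1 : nat -> nat) (Sinv : mat) (l a : nat) : fser :=
  fun m => if m < 0 then Sinv (eidx p1 n1 a (`|m| - 1)) l else 0.

Definition Cz (F : nat -> nat -> fser) (l : int) (a : nat) : fser :=
  if 0 <= l then F `|l|%N a else fun _ => 0.

Definition fzmul (F : fser) : fser := fun m => F (m - 1).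

(* c_b = Sbar e_{2,b}(0), cbar_a = (S^{-1})^T e_{1,a}(0): l-th entries *)
Definition cvec (p2 : nat) (n2 : nat -> nat) (Sb : mat) (l b : nat) : R :=
  Sb l (eidx p2 n2 b 0).
Definition cbvec (p1 : nat) (n1 : nat -> nat) (Sinv : mat) (l a : nat) : R :=
  Sinv (eidx p1 n1 a 0) l.

End Defs.

(* Main.v *)
Require Import Defs.
From HB Require Import structures.
From mathcomp Require Import all_boot all_order all_algebra.
From mathcomp Require Import all_classical all_reals all_analysis.
From mathcomp Require Import zify.
Import Order.TTheory GRing.Theory Num.Theory.
Local Open Scope ring_scope.
Section Idx.
Local Open Scope nat_scope.
Variables (p : nat) (n : nat -> nat).
Hypothesis p0 : (0 < p)%N.
Hypothesis n0 : forall a, (a < p)%N -> (0 < n a)%N.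

Lemma offS a : off n a.+1 = (off n a + n a)%N.
Proof. by rewrite /off big_ord_recr. Qed.

Lemma off_mono {a b} : (a <= b)%N -> (off n a <= off n b)%N.
Proof.
move=> /subnKC <-; elim: (b - a)%N => [|k IH]; first by rewrite addn0.
by rewrite addnS offS; apply: leq_trans IH (leq_addr _ _).
Qed.

Lemma totE : tot p n = off n p. Proof. by []. Qed.

Lemma na_le {a} : (a < p)%N -> (n a <= tot p n)%N.
Proof.
move=> ha; rewrite totE; have := off_mono ha; rewrite offS; lia. Qed.

Lemma tot_gt0 : (0 < tot p n)%N.
Proof. by have := n0 _ p0; have := na_le (a:=0) p0; lia. Qed.

Lemma aidx_spec i : (aidx p n i < p)%N /\
  (off n (aidx p n i) <= i %% tot p n < off n (aidx p n i).+1)%N.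
Proof.
set P := (fun a => i %% tot p n < off n a.+1)%N.
have hp : has P (iota 0 p).
  apply/hasP; exists p.-1; first by rewrite mem_iota add0n prednK ?leqnn.
  by rewrite /P prednK // -totE ltn_mod tot_gt0.
have hlt : (aidx p n i < p)%N by move: hp; rewrite has_find size_iota.
split=> //; apply/andP; split; last first.
  by have := nth_find 0%N hp; rewrite nth_iota.
rewrite /aidx -/P; case E: (find P (iota 0 p)) => [|a]; first by rewrite /off big_ord0.
have hlt' : (a.+1 < p)%N by move: hlt; rewrite /aidx -/P E.
have := @before_find _ 0%N P (iota 0 p) a; rewrite E ltnSn => /(_ isT).
rewrite nth_iota ?add0n; last lia.
by rewrite /P => /negbT; rewrite -leqNgt.
Qed.

Lemma aidx_uniq i a : (a < p)%N ->
  (off n a <= i %% tot p n < off n a.+1)%N -> aidx p n i = a.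
Proof.
move=> ha /andP[h1 h2]; have [_ /andP[h3 h4]] := aidx_spec i.
case: (ltngtP (aidx p n i) a) => // hc.
  by have := off_mono hc; lia.
by have := off_mono hc; lia.
Qed.

Lemma eidx_lt a k : (a < p)%N -> (off n a + k %% n a < tot p n)%N.
Proof.
move=> ha; have := off_mono ha; rewrite offS -totE.
have := ltn_pmod k (n0 _ ha); lia.
Qed.

Lemma eidx_mod a k : (a < p)%N -> eidx p n a k %% tot p n = (off n a + k %% n a)%N.
Proof. by move=> ha; rewrite /eidx -addnA modnMDl modn_small //; apply: eidx_lt. Qed.
Lemma eidx_div a k : (a < p)%N -> eidx p n a k %/ tot p n = k %/ n a.
Proof.
by move=> ha; rewrite /eidx -addnA divnMDl ?tot_gt0 // (divn_small (eidx_lt a k ha)) addn0.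
Qed.

Lemma aidx_eidx a k : (a < p)%N -> aidx p n (eidx p n a k) = a.
Proof.
move=> ha; apply: aidx_uniq => //; rewrite eidx_mod // offS.
have := ltn_pmod k (n0 _ ha); lia.
Qed.

Lemma kidx_eidx a k : (a < p)%N -> kidx p n (eidx p n a k) = k.
Proof.
move=> ha; rewrite /kidx aidx_eidx // eidx_mod // eidx_div //.
by rewrite addKn -divn_eq.
Qed.

Lemma aidx_lt i : (aidx p n i < p)%N.
Proof. by have [] := aidx_spec i. Qed.

Lemma eidx_kidx i : eidx p n (aidx p n i) (kidx p n i) = i.
Proof.
have [ha /andP[h1 h2]] := aidx_spec i.
set a := aidx p n i in ha h1 h2 *.
have c0 := n0 _ ha.
have hr : (i %% tot p n - off n a < n a)%N by move: h2; rewrite offS; lia.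
rewrite /eidx /kidx -/a divnMDl // (divn_small hr) addn0.
rewrite modnMDl (modn_small hr) -addnA subnKC //.
by rewrite -divn_eq.
Qed.

Lemma eidx_inj {a a' k k'} : (a < p)%N -> (a' < p)%N ->
  eidx p n a k = eidx p n a' k' -> a = a' /\ k = k'.
Proof.
move=> ha ha' e; split.
  by rewrite -(aidx_eidx a k ha) e aidx_eidx.
by rewrite -(kidx_eidx a k ha) e kidx_eidx.
Qed.

Lemma eidx_alt {a} k : (a < p)%N ->
  eidx p n a k = (k + k %/ n a * (tot p n - n a) + off n a)%N.
Proof.
move=> ha; rewrite /eidx.
have [c ->] : exists c, tot p n = (n a + c)%N.
  by exists (tot p n - n a); rewrite subnKC // na_le.
rewrite addKn mulnDr; have := divn_eq k (n a); lia.
Qed.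

Definition sc i := eidx p n (aidx p n i) (kidx p n i).+1.

Lemma sc_eq i a t : (a < p)%N -> (sc i == eidx p n a t.+1) = (i == eidx p n a t).
Proof.
move=> ha; apply/eqP/eqP => [e|->].
  have [e1 e2] := eidx_inj (aidx_lt i) ha e.
  by rewrite -(eidx_kidx i) e1; case: e2 => ->.
by rewrite /sc aidx_eidx // kidx_eidx.
Qed.

Lemma sc_neq0 i a : (a < p)%N -> sc i != eidx p n a 0.
Proof. by move=> ha; apply/eqP => /(eidx_inj (aidx_lt i) ha) []. Qed.

Lemma sc_le i : (sc i <= i + (tot p n - n (aidx p n i)).+1)%N.
Proof.
have ha := aidx_lt i; have c0 := n0 _ ha.
have ei := eidx_kidx i; rewrite (eidx_alt _ ha) in ei.
rewrite /sc (eidx_alt _ ha).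
set k := kidx p n i in ei *; set c := (tot p n - _)%N in ei *; set d := n (aidx p n i) in ei c0 *.
have : (k.+1 %/ d <= k %/ d + 1)%N.
  rewrite {1}(divn_eq k d) -addn1 -addnA divnMDl // leq_add2l.
  rewrite addn1; apply: leq_trans (leq_div2r d (ltn_pmod k c0)) _.
  by rewrite divnn c0.
move=> h; have : (k.+1 %/ d * c <= k %/ d * c + c)%N.
  by apply: leq_trans (leq_mul h (leqnn c)) _; rewrite mulnDl mul1n.
lia.
Qed.

Lemma sc_leT i : (sc i <= i + tot p n)%N.
Proof. have := sc_le i; have := n0 _ (aidx_lt i); have := na_le (aidx_lt i); lia. Qed.

Lemma sc_leN i : (sc i <= i + Nbd p n)%N.
Proof.
apply: leq_trans (sc_le i) _; rewrite leq_add2l -addn1.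
rewrite /Nbd; exact: (@leq_bigmax _ (fun a : 'I_p => (tot p n - n a + 1)%N) (Ordinal (aidx_lt i))).
Qed.

Lemma eidx_eqE i a k : (a < p)%N ->
  (i == eidx p n a k) = (aidx p n i == a) && (kidx p n i == k).
Proof.
move=> ha; apply/eqP/andP => [->|[/eqP <- /eqP <-]]; last by rewrite eidx_kidx.
by rewrite aidx_eidx // kidx_eidx.
Qed.

Lemma Ups_E (R : realType) i j : @Ups R p n i j = (j == sc i)%:R.
Proof.
rewrite /Ups (bigD1 (Ordinal (aidx_lt i))) //= big1 ?addr0.
  rewrite /Lam eqxx /= /sc eidx_eqE ?aidx_lt //.
move=> a /negPf ha; rewrite /Lam.
suff -> : (aidx p n i == a) = false by [].
by apply/negbTE; apply: contraFneq ha => e; apply/eqP/val_inj.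
Qed.

End Idx.

Section Sums.
Variable R : realType.

Lemma sum_delta (N x : nat) (F : nat -> R) :
  \sum_(i < N) ((i : nat) == x)%:R * F i = if (x < N)%N then F x else 0.
Proof.
case: ltnP => hx.
  rewrite (bigD1 (Ordinal hx)) //= eqxx mul1r big1 ?addr0 // => i hi.
  suff -> : ((i:nat) == x) = false by rewrite mul0r.
  by apply/negbTE; apply: contra hi => /eqP e; apply/eqP/val_inj.
rewrite big1 // => i _; suff -> : ((i:nat) == x) = false by rewrite mul0r.
by apply/negbTE; rewrite neq_ltn (leq_trans (ltn_ord i) hx).
Qed.

Lemma sum_ext (F : nat -> R) M M' : (M <= M')%N ->
  (forall m, (M <= m)%N -> F m = 0) ->
  \sum_(m < M) F m = \sum_(m < M') F m.
Proof.
move=> hM hF; rewrite (big_ord_widen _ _ hM) big_mkcond /=; apply: eq_bigr => i _.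
by case: ifP => // /negbT; rewrite -leqNgt => /hF ->.
Qed.

Lemma band_sum (A B l : nat) (F : nat -> R) :
  (forall m, (m + B < l)%N -> F m = 0) ->
  \sum_(i < (A + B).+1) (if 0 <= l%:Z + (i%:Z - B%:Z)
                          then F (absz (l%:Z + (i%:Z - B%:Z))) else 0)
  = \sum_(m < (l + A).+1) F m.
Proof.
move=> hF; case: (leqP B l) => hB.
  rewrite (eq_bigr (fun i : 'I_(A + B).+1 => F (i + (l - B))%N)); last first.
    move=> i _; have -> : l%:Z + (i%:Z - B%:Z) = Posz (i + (l - B))%N by lia.
    by [].
  rewrite -(big_mkord xpredT (fun i => F (i + (l - B))%N)) -(big_mkord xpredT F).
  rewrite [RHS](big_cat_nat _ (n := (l - B)%N)) //=; last by lia.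
  rewrite [X in _ = X + _]big_nat_cond [X in _ = X + _]big1 ?add0r; last first.
    by move=> m /andP[/andP[_ hm] _]; apply: hF; lia.
  have := @big_addn R 0 +%R 0 (l + A).+1 (l - B) xpredT F; rewrite add0n => ->.
  by congr (\sum_(0 <= i < _ | _) _); lia.
rewrite -(big_mkord xpredT (fun i => if 0 <= l%:Z + (i%:Z - B%:Z) then F (absz (l%:Z + (i%:Z - B%:Z))) else 0)).
rewrite (big_cat_nat _ (n := (B - l)%N)) //=; last by lia.
rewrite big_nat_cond big1 ?add0r; last first.
  move=> i /andP[/andP[_ hi] _].
  by have -> : (0 <= l%:Z + (i%:Z - B%:Z)) = false by lia.
have := @big_addn R 0 +%R 0 (A + B).+1 (B - l)%N xpredT
  (fun i => if 0 <= l%:Z + (i%:Z - B%:Z) then F (absz (l%:Z + (i%:Z - B%:Z))) else 0).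
rewrite add0n => ->.
have -> : ((A + B).+1 - (B - l) = (l + A).+1)%N by lia.
rewrite big_mkord; apply: eq_bigr => i _.
have -> : l%:Z + (Posz (i + (B - l))%N - B%:Z) = i%:Z by lia.
by [].
Qed.

Lemma band_sum_rev (A B l : nat) (F : nat -> R) :
  (forall m, (m + A < l)%N -> F m = 0) ->
  \sum_(i < (A + B).+1) (if 0 <= l%:Z - (i%:Z - B%:Z)
                          then F (absz (l%:Z - (i%:Z - B%:Z))%R) else 0)
  = \sum_(m < (l + B).+1) F m.
Proof.
move=> hF; rewrite -(band_sum B A l F hF) (reindex_inj rev_ord_inj) /=.
rewrite [(B + A)%N]addnC; apply: eq_bigr => i _.
have -> : l%:Z - (Posz ((A + B).+1 - i.+1)%N - B%:Z) = l%:Z + (i%:Z - A%:Z).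
  by have := ltn_ord i; lia.
by [].
Qed.

End Sums.

Section Mat.
Variable R : realType.
Variables (mu : {finite_measure set R -> \bar R}) (I : interval R)
  (p1 p2 : nat) (n1 n2 : nat -> nat) (w1 w2 : nat -> R -> R)
  (S Sinv Sb Sbinv : mat R).
Hypotheses (p10 : (0 < p1)%N) (p20 : (0 < p2)%N)
  (n10 : forall a, (a < p1)%N -> (0 < n1 a)%N)
  (n20 : forall b, (b < p2)%N -> (0 < n2 b)%N).
Hypotheses (SL : lower_tri S) (SiL : lower_tri Sinv)
  (SSi : mulL S Sinv = @idmat R) (SiS : mulL Sinv S = @idmat R)
  (SbU : upper_tri Sb) (SbiU : upper_tri Sbinv)
  (SbSbi : mulU Sb Sbinv = @idmat R) (SbiSb : mulU Sbinv Sb = @idmat R)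
  (hg : moment mu I p1 p2 n1 n2 w1 w2 = mulL Sinv Sb).

Local Notation J := (Jmat p1 n1 S Sinv).
Local Notation s1 := (sc p1 n1).
Local Notation s2 := (sc p2 n2).
Local Notation g := (moment mu I p1 p2 n1 n2 w1 w2).
Local Notation N1 := (Nbd p1 n1).
Local Notation N2 := (Nbd p2 n2).
Local Notation T1 := (tot p1 n1).
Local Notation T2 := (tot p2 n2).

Lemma SSiE x i : \sum_(k < x.+1) S x k * Sinv k i = (x == i)%:R.
Proof. exact: (congr1 (fun M => M x i) SSi). Qed.
Lemma SiSE x i : \sum_(k < x.+1) Sinv x k * S k i = (x == i)%:R.
Proof. exact: (congr1 (fun M => M x i) SiS). Qed.
Lemma SbSbiE x i : \sum_(k < i.+1) Sb x k * Sbinv k i = (x == i)%:R.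
Proof. exact: (congr1 (fun M => M x i) SbSbi). Qed.
Lemma SbiSbE x i : \sum_(k < i.+1) Sbinv x k * Sb k i = (x == i)%:R.
Proof. exact: (congr1 (fun M => M x i) SbiSb). Qed.

Lemma JE l m : J l m = \sum_(i < l.+1) S l i * Sinv (s1 i) m.
Proof.
rewrite /Jmat; apply: eq_bigr => i _.
rewrite (eq_bigr (fun j : 'I_(l + T1).+1 =>
   ((j : nat) == s1 i)%:R * (S l i * Sinv j m))); last first.
  by move=> j _; rewrite (Ups_E _ _ p10 n10) mulrCA mulrA.
rewrite (@sum_delta _ _ _ (fun j => S l i * Sinv j m)) ltnS; have := sc_leT _ _ p10 n10 i; have := ltn_ord i.
by case: ifP => //; lia.
Qed.

Lemma J_up l m : (l + N1 < m)%N -> J l m = 0.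
Proof.
move=> h; rewrite JE big1 // => i _; rewrite SiL ?mulr0 //.
by have := sc_leN _ _ p10 n10 i; have := ltn_ord i; lia.
Qed.

Lemma Sinv_g x m : Sinv x m = \sum_(j < m.+1) g x j * Sbinv j m.
Proof.
rewrite (eq_bigr (fun j : 'I_m.+1 =>
   \sum_(k < x.+1) Sinv x k * Sb k j * Sbinv j m)); last first.
  by move=> j _; rewrite hg /mulL mulr_suml.
rewrite exchange_big /=.
rewrite (eq_bigr (fun k : 'I_x.+1 => ((k : nat) == m)%:R * Sinv x k)); last first.
  move=> k _; under eq_bigr do rewrite -mulrA.
  by rewrite -mulr_sumr SbSbiE mulrC.
rewrite sum_delta; case: ifP => // /negbT; rewrite -leqNgt => h.
by rewrite SiL.
Qed.

Lemma Sb_g x m : Sb x m = \sum_(k < x.+1) S x k * g k m.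
Proof.
rewrite (eq_bigr (fun k : 'I_x.+1 =>
   \sum_(t < x.+1) S x k * (Sinv k t * Sb t m))); last first.
  move=> k _; rewrite hg /mulL mulr_sumr.
  rewrite (@sum_ext _ (fun t => S x k * (Sinv k t * Sb t m)) k.+1 x.+1) //.
  by move=> t ht; rewrite SiL ?mul0r ?mulr0.
rewrite exchange_big /=.
rewrite (eq_bigr (fun t : 'I_x.+1 => ((t : nat) == x)%:R * Sb t m)); last first.
  move=> t _; under eq_bigr do rewrite mulrA.
  by rewrite -mulr_suml SSiE eq_sym.
by rewrite (@sum_delta _ _ _ (fun t => Sb t m)) ltnSn.
Qed.

Lemma g_shift i j : g (s1 i) j = g i (s2 j).
Proof.
rewrite /moment /sc.
rewrite (aidx_eidx _ _ p10 n10 _ _ (aidx_lt _ _ p10 n10 i)).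
rewrite (kidx_eidx _ _ p10 n10 _ _ (aidx_lt _ _ p10 n10 i)).
rewrite (aidx_eidx _ _ p20 n20 _ _ (aidx_lt _ _ p20 n20 j)).
rewrite (kidx_eidx _ _ p20 n20 _ _ (aidx_lt _ _ p20 n20 j)).
by rewrite addSn addnS.
Qed.

Lemma JbE l m : J l m = \sum_(y < m.+1) Sb l (s2 y) * Sbinv y m.
Proof.
rewrite JE.
rewrite (eq_bigr (fun i : 'I_l.+1 =>
   \sum_(j < m.+1) S l i * g i (s2 j) * Sbinv j m)); last first.
  move=> i _; rewrite Sinv_g mulr_sumr; apply: eq_bigr => j _.
  by rewrite g_shift mulrA.
rewrite exchange_big /=; apply: eq_bigr => j _.
by rewrite -mulr_suml Sb_g.
Qed.

Lemma J_lo l m : (m + N2 < l)%N -> J l m = 0.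
Proof.
move=> h; rewrite JbE big1 // => y _; rewrite SbU ?mul0r //.
by have := sc_leN _ _ p20 n20 y; have := ltn_ord y; lia.
Qed.

Lemma JI1 l x M : (forall m, (M <= m)%N -> J l m = 0) ->
  \sum_(m < M) J l m * S m x = \sum_(i < l.+1) S l i * (s1 i == x)%:R.
Proof.
move=> hJ.
rewrite (@sum_ext _ (fun m => J l m * S m x) M (M + l + T1).+1); last first.
- by move=> m hm; rewrite hJ ?mul0r.
- lia.
rewrite (eq_bigr (fun m : 'I_(M + l + T1).+1 =>
   \sum_(i < l.+1) S l i * (Sinv (s1 i) m * S m x))); last first.
  by move=> m _; rewrite JE mulr_suml; apply: eq_bigr => i _; rewrite mulrA.
rewrite exchange_big /=; apply: eq_bigr => i _; rewrite -mulr_sumr.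
congr (_ * _); rewrite -SiSE.
rewrite (@sum_ext _ (fun m => Sinv (s1 i) m * S m x) (s1 i).+1 (M + l + T1).+1) //.
- by have := sc_leT _ _ p10 n10 i; have := ltn_ord i; lia.
- by move=> m hm; rewrite SiL ?mul0r.
Qed.

Lemma JI2 x l M : (forall m, (M <= m)%N -> J m l = 0) ->
  \sum_(m < M) Sinv x m * J m l = Sinv (s1 x) l.
Proof.
move=> hJ.
rewrite (@sum_ext _ (fun m => Sinv x m * J m l) M (M + x).+1); last first.
- by move=> m hm; rewrite hJ ?mulr0.
- lia.
rewrite (eq_bigr (fun m : 'I_(M + x).+1 =>
   \sum_(i < (M + x).+1) Sinv x m * (S m i * Sinv (s1 i) l))); last first.
  move=> m _; rewrite JE mulr_sumr.
  rewrite (@sum_ext _ (fun i => Sinv x m * (S m i * Sinv (s1 i) l)) m.+1 (M + x).+1) //.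
  by move=> i hi; rewrite SL ?mul0r ?mulr0.
rewrite exchange_big /=.
rewrite (eq_bigr (fun i : 'I_(M + x).+1 => ((i : nat) == x)%:R * Sinv (s1 i) l)); last first.
  move=> i _; under eq_bigr do rewrite mulrA.
  rewrite -mulr_suml eq_sym -SiSE.
  rewrite -(@sum_ext _ (fun m => Sinv x m * S m i) x.+1 (M + x).+1) //; try lia.
  by move=> m hm; rewrite SiL ?mul0r.
by rewrite (@sum_delta _ _ _ (fun i => Sinv (s1 i) l)) ltnS leq_addl.
Qed.

Lemma JI3 l x M : (forall m, (M <= m)%N -> J l m = 0) ->
  \sum_(m < M) J l m * Sb m x = Sb l (s2 x).
Proof.
move=> hJ.
rewrite (@sum_ext _ (fun m => J l m * Sb m x) M (M + x).+1); last first.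
- by move=> m hm; rewrite hJ ?mul0r.
- lia.
rewrite (eq_bigr (fun m : 'I_(M + x).+1 =>
   \sum_(y < (M + x).+1) Sb l (s2 y) * (Sbinv y m * Sb m x))); last first.
  move=> m _; rewrite JbE mulr_suml.
  rewrite (@sum_ext _ (fun y => Sb l (s2 y) * Sbinv y m * Sb m x) m.+1 (M + x).+1) //.
    by apply: eq_bigr => y _; rewrite mulrA.
  by move=> y hy; rewrite SbiU ?mulr0 ?mul0r.
rewrite exchange_big /=.
rewrite (eq_bigr (fun y : 'I_(M + x).+1 => ((y : nat) == x)%:R * Sb l (s2 y))); last first.
  move=> y _; rewrite -mulr_sumr mulrC -SbiSbE.
  rewrite -(@sum_ext _ (fun m => Sbinv y m * Sb m x) x.+1 (M + x).+1) //; try lia.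
  by move=> m hm; rewrite [Sb m _]SbU ?mulr0.
by rewrite (@sum_delta _ _ _ (fun y => Sb l (s2 y))) ltnS leq_addl.
Qed.

Lemma JI4 x l M : (forall m, (M <= m)%N -> J m l = 0) ->
  \sum_(m < M) Sbinv x m * J m l = \sum_(y < l.+1) (x == s2 y)%:R * Sbinv y l.
Proof.
move=> hJ.
rewrite (@sum_ext _ (fun m => Sbinv x m * J m l) M (M + l + T2).+1); last first.
- by move=> m hm; rewrite hJ ?mulr0.
- lia.
rewrite (eq_bigr (fun m : 'I_(M + l + T2).+1 =>
   \sum_(y < l.+1) Sbinv x m * Sb m (s2 y) * Sbinv y l)); last first.
  by move=> m _; rewrite JbE mulr_sumr; apply: eq_bigr => y _; rewrite mulrA.
rewrite exchange_big /=; apply: eq_bigr => y _; rewrite -mulr_suml.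
congr (_ * _); rewrite -SbiSbE.
rewrite (@sum_ext _ (fun m => Sbinv x m * Sb m (s2 y)) (s2 y).+1 (M + l + T2).+1) //.
- by have := sc_leT _ _ p20 n20 y; have := ltn_ord y; lia.
- by move=> m hm; rewrite [Sb m _]SbU ?mulr0.
Qed.

Lemma sc_e p n (p0 : (0 < p)%N) (n0 : forall a, (a < p)%N -> (0 < n a)%N) a k :
  (a < p)%N -> sc p n (eidx p n a k) = eidx p n a k.+1.
Proof. by move=> ha; rewrite /sc aidx_eidx // kidx_eidx. Qed.

Lemma chi_coef p n (p0 : (0 < p)%N) (n0 : forall a, (a < p)%N -> (0 < n a)%N) a i t :
  (a < p)%N -> (@chi R p n a i)`_t = (i == eidx p n a t)%:R.
Proof.
move=> ha; rewrite /chi (eidx_eqE _ _ p0 n0 _ _ _ ha); case: ifP => h /=.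
  by rewrite coefXn eq_sym.
by rewrite coef0.
Qed.

Lemma Apol_coef l a t : (a < p1)%N -> (Apol p1 n1 S l a)`_t = S l (eidx p1 n1 a t).
Proof.
move=> ha; rewrite /Apol coef_sum.
rewrite (eq_bigr (fun i : 'I_l.+1 => ((i : nat) == eidx p1 n1 a t)%:R * S l i)); last first.
  by move=> i _; rewrite coefZ (chi_coef _ _ p10 n10) // mulrC.
rewrite (@sum_delta _ _ _ (fun i => S l i)); case: ifP => // /negbT.
by rewrite -leqNgt => h; rewrite SL.
Qed.

Lemma Abpol_coef l b t : (b < p2)%N -> (Abpol p2 n2 Sbinv l b)`_t = Sbinv (eidx p2 n2 b t) l.
Proof.
move=> hb; rewrite /Abpol coef_sum.
rewrite (eq_bigr (fun i : 'I_l.+1 => ((i : nat) == eidx p2 n2 b t)%:R * Sbinv i l)); last first.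
  by move=> i _; rewrite coefZ (chi_coef _ _ p20 n20) // mulrC.
rewrite (@sum_delta _ _ _ (fun i => Sbinv i l)); case: ifP => // /negbT.
by rewrite -leqNgt => h; rewrite SbiU.
Qed.

Lemma claim1 l a : (a < p1)%N ->
  'X * Apol p1 n1 S l a
     = \sum_(i < (N1 + N2).+1)
         let k := i%:Z - N2%:Z in
         Jz J l (l%:Z + k) *: Az (Apol p1 n1 S) (l%:Z + k) a.
Proof.
move=> ha; apply/polyP => t; rewrite coefXM [RHS]coef_sum.
rewrite (eq_bigr (fun i : 'I_(N1 + N2).+1 =>
   if 0 <= l%:Z + (i%:Z - N2%:Z) then
     (fun m => J l m * S m (eidx p1 n1 a t)) (absz (l%:Z + (i%:Z - N2%:Z)))
   else 0)); last first.
  move=> i _ /=; rewrite coefZ /Jz /Az le0z_nat /=.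
  by case: ifP => h; rewrite ?Apol_coef ?coef0 ?mulr0.
rewrite (@band_sum _ N1 N2 l (fun m => J l m * S m (eidx p1 n1 a t))); last by move=> m hm; rewrite J_lo ?mul0r.
rewrite (JI1 l (eidx p1 n1 a t) (l + N1).+1); last by move=> m hm; rewrite J_up //; lia.
case: t => [|t] /=.
  by rewrite big1 // => i _; rewrite (negbTE (sc_neq0 _ _ p10 n10 _ _ ha)) mulr0.
rewrite Apol_coef //.
rewrite (eq_bigr (fun i : 'I_l.+1 => ((i : nat) == eidx p1 n1 a t)%:R * S l i)); last first.
  by move=> i _; rewrite (sc_eq _ _ p10 n10 _ _ _ ha) mulrC.
rewrite (@sum_delta _ _ _ (fun i => S l i)); case: ifP => // /negbT.
by rewrite -leqNgt => h; rewrite SL.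
Qed.

Lemma claim3 l b : (b < p2)%N ->
  'X * Abpol p2 n2 Sbinv l b
     = \sum_(i < (N1 + N2).+1)
         let k := i%:Z - N2%:Z in
         Jz J (l%:Z - k) l *: Az (Abpol p2 n2 Sbinv) (l%:Z - k) b.
Proof.
move=> hb; apply/polyP => t; rewrite coefXM [RHS]coef_sum.
rewrite (eq_bigr (fun i : 'I_(N1 + N2).+1 =>
   if 0 <= l%:Z - (i%:Z - N2%:Z) then
     (fun m => J m l * Sbinv (eidx p2 n2 b t) m) (absz (l%:Z - (i%:Z - N2%:Z))%R)
   else 0)); last first.
  move=> i _ /=; rewrite coefZ /Jz /Az le0z_nat andbT /=.
  by case: ifP => h; rewrite ?Abpol_coef ?coef0 ?mulr0.
rewrite (@band_sum_rev _ N1 N2 l (fun m => J m l * Sbinv (eidx p2 n2 b t) m)); last by move=> m hm; rewrite J_up ?mul0r.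
under eq_bigr do rewrite mulrC.
rewrite (JI4 (eidx p2 n2 b t) l (l + N2).+1); last by move=> m hm; rewrite J_lo //; lia.
case: t => [|t] /=.
  by rewrite big1 // => i _; rewrite eq_sym (negbTE (sc_neq0 _ _ p20 n20 _ _ hb)) mul0r.
rewrite Abpol_coef //.
rewrite (eq_bigr (fun i : 'I_l.+1 => ((i : nat) == eidx p2 n2 b t)%:R * Sbinv i l)); last first.
  by move=> i _; rewrite eq_sym (sc_eq _ _ p20 n20 _ _ _ hb).
rewrite (@sum_delta _ _ _ (fun i => Sbinv i l)); case: ifP => // /negbT.
by rewrite -leqNgt => h; rewrite SbiU.
Qed.

Lemma claim2 l b m : (b < p2)%N ->
  fzmul (Cser p2 n2 Sb l b) m - (m == 0)%:R * cvec p2 n2 Sb l b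
  = \sum_(i < (N1 + N2).+1)
      let k := i%:Z - N2%:Z in
      Jz J l (l%:Z + k) * Cz (Cser p2 n2 Sb) (l%:Z + k) b m.
Proof.
move=> hb.
rewrite (eq_bigr (fun i : 'I_(N1 + N2).+1 =>
   if 0 <= l%:Z + (i%:Z - N2%:Z) then
     (fun m' => J l m' * Cser p2 n2 Sb m' b m) (absz (l%:Z + (i%:Z - N2%:Z)))
   else 0)); last first.
  move=> i _ /=; rewrite /Jz /Cz le0z_nat /=.
  by case: ifP => h; rewrite ?mul0r.
rewrite (@band_sum _ N1 N2 l (fun m' => J l m' * Cser p2 n2 Sb m' b m)); last first.
  by move=> m' hm; rewrite J_lo ?mul0r.
rewrite /fzmul /cvec /Cser.
case: (boolP (m < 0)) => hm.
  rewrite (JI3 l (eidx p2 n2 b (`|m|%N - 1)) (l + N1).+1); last first.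
    by move=> m' hm'; rewrite J_up //; lia.
  have -> : (m - 1 < 0) = true by lia.
  have -> : (m == 0) = false by lia.
  rewrite mul0r subr0 (sc_e _ _ p20 n20) //.
  by have -> : (absz (m - 1)%R - 1 = (absz m - 1).+1)%N by lia.
rewrite big1 => [|i _]; last by rewrite mulr0.
case: (altP (m =P 0)) => [->|hm0] /=.
  by rewrite mul1r subrr.
have -> : (m - 1 < 0) = false by lia.
by rewrite mul0r subrr.
Qed.

Lemma claim4 l a m : (a < p1)%N ->
  fzmul (Cbser p1 n1 Sinv l a) m - (m == 0)%:R * cbvec p1 n1 Sinv l a
  = \sum_(i < (N1 + N2).+1)
      let k := i%:Z - N2%:Z in
      Jz J (l%:Z - k) l * Cz (Cbser p1 n1 Sinv) (l%:Z - k) a m.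
Proof.
move=> ha.
rewrite (eq_bigr (fun i : 'I_(N1 + N2).+1 =>
   if 0 <= l%:Z - (i%:Z - N2%:Z) then
     (fun m' => J m' l * Cbser p1 n1 Sinv m' a m) (absz (l%:Z - (i%:Z - N2%:Z))%R)
   else 0)); last first.
  move=> i _ /=; rewrite /Jz /Cz le0z_nat andbT /=.
  by case: ifP => h; rewrite ?mul0r.
rewrite (@band_sum_rev _ N1 N2 l (fun m' => J m' l * Cbser p1 n1 Sinv m' a m)); last first.
  by move=> m' hm; rewrite J_up ?mul0r.
rewrite /fzmul /cbvec /Cbser.
case: (boolP (m < 0)) => hm.
  under eq_bigr do rewrite mulrC.
  rewrite (JI2 (eidx p1 n1 a (`|m|%N - 1)) l (l + N2).+1); last first.
    by move=> m' hm'; rewrite J_lo //; lia.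
  have -> : (m - 1 < 0) = true by lia.
  have -> : (m == 0) = false by lia.
  rewrite mul0r subr0 (sc_e _ _ p10 n10) //.
  by have -> : (absz (m - 1)%R - 1 = (absz m - 1).+1)%N by lia.
rewrite big1 => [|i _]; last by rewrite mulr0.
case: (altP (m =P 0)) => [->|hm0] /=.
  by rewrite mul1r subrr.
have -> : (m - 1 < 0) = false by lia.
by rewrite mul0r subrr.
Qed.

End Mat.
Theorem theorem2p2
  (R : realType) (mu : {finite_measure set R -> \bar R}) (I : interval R)
  (p1 p2 : nat) (n1 n2 : nat -> nat) (w1 w2 : nat -> R -> R)
  (S Sinv Sb Sbinv : mat R) :
  (0 < p1)%N -> (0 < p2)%N ->
  (forall a, (a < p1)%N -> (0 < n1 a)%N) ->
  (forall b, (b < p2)%N -> (0 < n2 b)%N) ->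
  (forall a, (a < p1)%N -> measurable_fun [set` I] (w1 a)) ->
  (forall b, (b < p2)%N -> measurable_fun [set` I] (w2 b)) ->
  (forall i j, mu.-integrable [set` I]
     (fun x => (x ^+ (kidx p1 n1 i + kidx p2 n2 j)
                * w1 (aidx p1 n1 i) x * w2 (aidx p2 n2 j) x)%:E)) ->
  (* S unit lower triangular, Sinv its (lower triangular) inverse *)
  lower_tri S -> (forall i, S i i = 1) ->
  lower_tri Sinv -> mulL S Sinv = @idmat R -> mulL Sinv S = @idmat R ->
  (* Sbar upper triangular invertible, Sbinv its (upper triangular) inverse *)
  upper_tri Sb -> upper_tri Sbinv ->
  mulU Sb Sbinv = @idmat R -> mulU Sbinv Sb = @idmat R ->
  (* g = S^{-1} Sbar *)
  moment mu I p1 p2 n1 n2 w1 w2 = mulL Sinv Sb ->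
  let J := Jmat p1 n1 S Sinv in
  let N1 := Nbd p1 n1 in
  let N2 := Nbd p2 n2 in
  forall (l a b : nat), (a < p1)%N -> (b < p2)%N ->
  [/\
   'X * Apol p1 n1 S l a
     = \sum_(i < (N1 + N2).+1)
         let k := i%:Z - N2%:Z in
         Jz J l (l%:Z + k) *: Az (Apol p1 n1 S) (l%:Z + k) a,
   (forall m : int,
     fzmul (Cser p2 n2 Sb l b) m - (m == 0)%:R * cvec p2 n2 Sb l b
     = \sum_(i < (N1 + N2).+1)
         let k := i%:Z - N2%:Z in
         Jz J l (l%:Z + k) * Cz (Cser p2 n2 Sb) (l%:Z + k) b m),
   'X * Abpol p2 n2 Sbinv l b
     = \sum_(i < (N1 + N2).+1)
         let k := i%:Z - N2%:Z in
         Jz J (l%:Z - k) l *: Az (Abpol p2 n2 Sbinv) (l%:Z - k) b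
 & (forall m : int,
     fzmul (Cbser p1 n1 Sinv l a) m - (m == 0)%:R * cbvec p1 n1 Sinv l a
     = \sum_(i < (N1 + N2).+1)
         let k := i%:Z - N2%:Z in
         Jz J (l%:Z - k) l * Cz (Cbser p1 n1 Sinv) (l%:Z - k) a m)].

Proof.
move=> p10 p20 n10 n20 _ _ _ SL _ SiL SSi SiS SbU SbiU SbSbi SbiSb hg J N1 N2 l a b ha hb.
rewrite /J /N1 /N2; split.
- by apply: (@claim1 R mu I p1 p2 n1 n2 w1 w2 S Sinv Sb Sbinv).
- by move=> m; apply: (@claim2 R mu I p1 p2 n1 n2 w1 w2 S Sinv Sb Sbinv).
- by apply: (@claim3 R mu I p1 p2 n1 n2 w1 w2 S Sinv Sb Sbinv).
- by move=> m; apply: (@claim4 R mu I p1 p2 n1 n2 w1 w2 S Sinv Sb Sbinv).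
Qed.
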